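(* Let $p \in \beta\mathbb{N}$. If $p$ is prime with respect to $\tilde{\mid}$-divisibility, then $p$ is prime with respect to each of $\mid_l$, $\mid_r$ and $\mid_m$ divisibility.
   Context: $\mathbb{N}=\{1,2,3,\dots\}$ with the discrete topology; $\beta\mathbb{N}$ is its Stone–Čech compactification, identified with the set of ultrafilters on $\mathbb{N}$, where each $n\in\mathbb{N}$ is identified with the principal ultrafilter at $n$. Multiplication on $\beta\mathbb{N}$: for $x,y\in\beta\mathbb{N}$ and $A\subseteq\mathbb{N}$, $A\in x\cdot y$ iff $\{n\in\mathbb{N}: A/n\in y\}\in x$, where $A/n=\{m\in\mathbb{N}: mn\in A\}$. Divisibilities on $\beta\mathbb{N}$: $x\mid_l y$ iff $y=zx$ for some $z\in\beta\mathbb{N}$; $x\mid_r y$ iff $y=xz$ for some $z\in\beta\mathbb{N}$; $x\mid_m y$ iff $y=zxw$ for some $z,w\in\beta\mathbb{N}$; $x\,\tilde{\mid}\,y$ iff for every $A\in x$, the set $\{n\in\mathbb{N}:\exists a\in A,\ a\mid n\}$ belongs to $y$. An element $p\in\beta\mathbb{N}\setminus\{1\}$ is prime with respect to a given divisibility relation if the only elements dividing $p$ in that relation are $1$ and $p$. *)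

(* Defs.v *)
(* beta N = ultrafilters on N = {1,2,3,...}, represented as
   families of subsets of nat that contain the set of positive naturals. *)
From Stdlib Require Import Arith PeanoNat.

Definition uf := (nat -> Prop) -> Prop.

Definition is_uf (U : uf) : Prop :=
  U (fun n => 0 < n) /\
  ~ U (fun _ => False) /\
  (forall A B : nat -> Prop, U A -> (forall n, A n -> B n) -> U B) /\
  (forall A B : nat -> Prop, U A -> U B -> U (fun n => A n /\ B n)) /\
  (forall A : nat -> Prop, U A \/ U (fun n => ~ A n)).

Definition uf_eq (x y : uf) : Prop := forall A, x A <-> y A.

Definition principal (n : nat) : uf := fun A => A n.
Definition uf_one : uf := principal 1.

Definition uf_mul (x y : uf) : uf :=
  fun A => x (fun n => y (fun m => A (m * n))).

Definition ldiv (x y : uf) : Prop :=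
  exists z, is_uf z /\ uf_eq y (uf_mul z x).
Definition rdiv (x y : uf) : Prop :=
  exists z, is_uf z /\ uf_eq y (uf_mul x z).
Definition mdiv (x y : uf) : Prop :=
  exists z w, is_uf z /\ is_uf w /\ uf_eq y (uf_mul (uf_mul z x) w).
Definition tdiv (x y : uf) : Prop :=
  forall A, x A -> y (fun n => exists a, A a /\ Nat.divide a n).

Definition uf_prime (R : uf -> uf -> Prop) (p : uf) : Prop :=
  ~ uf_eq p uf_one /\
  forall x, is_uf x -> R x p -> uf_eq x uf_one \/ uf_eq x p.

(* Main.v *)
Require Import Defs.
From Stdlib Require Import Arith PeanoNat Lia.

Lemma uf_true (z : uf) : is_uf z -> forall P : nat -> Prop, (forall n, P n) -> z P.
Proof. intros [h0 [_ [hm _]]] P HP. apply (hm _ _ h0). intros; apply HP. Qed.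

Lemma ldiv_t x p : is_uf x -> ldiv x p -> tdiv x p.
Proof.
  intros hx [z [hz He]] A HA. apply He. unfold uf_mul.
  apply uf_true; auto. intro n.
  destruct hx as [_ [_ [hm _]]]. apply (hm _ _ HA).
  intros m Hm. exists m. split; auto. exists n. lia.
Qed.

Lemma rdiv_t x p : is_uf x -> rdiv x p -> tdiv x p.
Proof.
  intros hx [z [hz He]] A HA. apply He. unfold uf_mul.
  destruct hx as [_ [_ [hm _]]]. apply (hm _ _ HA).
  intros n Hn. apply uf_true; auto. intro m.
  exists n. split; auto. exists m. lia.
Qed.

Lemma mdiv_t x p : is_uf x -> mdiv x p -> tdiv x p.
Proof.
  intros hx [z [w [hz [hw He]]]] A HA. apply He. unfold uf_mul.
  apply uf_true; auto. intro k.
  destruct hx as [_ [_ [hm _]]]. apply (hm _ _ HA).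
  intros n Hn. apply uf_true; auto. intro m.
  exists n. split; auto. exists (m * k). lia.
Qed.

Theorem lemma1p4 (p : uf) (hp : is_uf p) :
  uf_prime tdiv p ->
  uf_prime ldiv p /\ uf_prime rdiv p /\ uf_prime mdiv p.
Proof.
  intros [Hn H]. split; [|split]; split; auto; intros x hx Hd; apply H; auto.
  - apply ldiv_t; auto.
  - apply rdiv_t; auto.
  - apply mdiv_t; auto.
Qed.
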